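(* Let $A$ be a finite set of actions and let $\{\pi_\theta\}_{\theta\in\mathbb{R}^d}$ be a family of probability distributions on $A$ with $\pi_\theta(a)>0$ and $\theta\mapsto\pi_\theta(a)$ differentiable for every $a\in A$. Let $R:A\to\mathbb{R}$ be the reward function, let $A$ also denote the random action drawn from $\pi_\theta$, and write $R=R(A)$. Define $\eta_s(\theta):=\mathbb{E}_{a\sim\pi_\theta}[R(a)]$, $g_s(\theta):=\nabla_\theta\eta_s(\theta)$ and $S_\theta(a):=\nabla_\theta\log\pi_\theta(a)$, and assume $\|S_\theta(a)\|\le G_{\max}$ and $|R(a)|\le R_{\max}$ for all $a\in A$. Suppose the rewards take values in an interval $[R_{lo},R_{hi}]\subseteq[-R_{\max},R_{\max}]$ which is partitioned into $B$ consecutive non-overlapping intervals $B_1,\dots,B_B$, each of the form $B_k=[b_k,b_k+\Delta)$ of common length $\Delta>0$, with midpoints $m_k:=b_k+\Delta/2$, and let the discretized reward be $\tilde R:=k$ if and only if $R\in B_k$. Then $$\|g_s(\theta)\|\le \sqrt{2}\,G_{\max}R_{\max}\sqrt{I(A;\tilde R)}+G_{\max}\Delta .$$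
   Context: One-shot game (horizon one): the state is fixed, the agent draws $a\sim\pi_\theta$ and receives reward $R(a)$. $\|\cdot\|$ is the Euclidean norm; $I(A;\tilde R)$ is the mutual information (natural logarithm) between the action $A\sim\pi_\theta$ and the bin index $\tilde R$. *)

(* Defs.v *)
From HB Require Import structures.
From mathcomp Require Import all_boot all_order all_algebra.
From mathcomp Require Import all_classical all_reals all_analysis.
Set Implicit Arguments. Unset Strict Implicit. Unset Printing Implicit Defensive.
Import Order.TTheory GRing.Theory Num.Theory.
Import numFieldNormedType.Exports.
Local Open Scope ring_scope.

Definition grad (R : realType) (d : nat) (f : 'rV[R]_d -> R) (x : 'rV[R]_d)
  : 'rV[R]_d := \row_(i < d) ('D_(delta_mx 0 i) f x).

Definition enorm (R : realType) (d : nat) (v : 'rV[R]_d) : R :=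
  Num.sqrt (\sum_(i < d) v 0 i ^+ 2).

Definition inbin (R : realType) (b delta r : R) : bool := (b <= r) && (r < b + delta).

Definition mutual_info (R : realType) (X Y : finType) (P : X -> Y -> R) : R :=
  \sum_(x : X) \sum_(y : Y)
    (if 0 < P x y then
       P x y * ln (P x y / ((\sum_(y' : Y) P x y') * (\sum_(x' : X) P x' y)))
     else 0).

(* Joint pmf of (A, Rtilde): bins B_k = [Rlo + k*delta, Rlo + (k+1)*delta),
   k : 'I_B, and Rtilde = k iff R(A) in B_k. *)
Definition joint_A_Rtilde (R : realType) (d : nat) (A : finType)
  (pi : 'rV[R]_d -> A -> R) (theta : 'rV[R]_d) (rew : A -> R)
  (Rlo delta : R) (B : nat) (a : A) (k : 'I_B) : R :=
  pi theta a * (inbin (Rlo + k%:R * delta) delta (rew a))%:R.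

(* Main.v *)
Require Import Defs.
From HB Require Import structures.
From mathcomp Require Import all_boot all_order all_algebra.
From mathcomp Require Import all_classical all_reals all_analysis.
From mathcomp Require Import ring lra.
Import Order.TTheory GRing.Theory Num.Theory.
Import numFieldNormedType.Exports.
Local Open Scope classical_set_scope.
Local Open Scope ring_scope.

Section LnIneq.
Variable R : realType.

Lemma mvt1 (f df : R -> R) (x : R) : 0 < x ->
  (forall y : R, 0 < y -> is_derive y 1 f (df y)) ->
  exists c, [/\ 0 < c, f x - f 1 = df c * (x - 1),
     (x < 1 -> c < 1) & (1 < x -> 1 < c)].
Proof.
move=> x0 H.
have oo (a b y : R) : y \in `]a, b[ -> a < y /\ y < b.
  by rewrite in_itv /= => /andP.
have cont : forall a b, 0 < a -> {within `[a, b], continuous f}.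
  move=> a b a0; apply: derivable_within_continuous => y.
  rewrite in_itv /= => /andP[ay _].
  by have [] := H y (lt_le_trans a0 ay).
case: (ltgtP x 1) => [x1|x1|->].
- have [c] := MVT x1 (fun y yi => H y (lt_trans x0 (oo _ _ _ yi).1)) (cont _ _ x0).
  move=> ci E; exists c; split.
  + exact: lt_trans x0 (oo _ _ _ ci).1.
  + by rewrite -[LHS]opprB E; ring.
  + by move=> _; exact: (oo _ _ _ ci).2.
  + by move=> h; first [ done | have := lt_trans x1 h; by rewrite ltxx ].
- have [c] := MVT x1 (fun y yi => H y (lt_trans ltr01 (oo _ _ _ yi).1)) (cont _ _ ltr01).
  move=> ci E; exists c; split.
  + exact: lt_trans ltr01 (oo _ _ _ ci).1.
  + by rewrite E.
  + by move=> h; first [ done | have := lt_trans x1 h; by rewrite ltxx ].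
  + by move=> _; exact: (oo _ _ _ ci).1.
- by exists 1; split; rewrite ?ltxx // !subrr mulr0.
Qed.

Lemma ln_ge_1Vx (x : R) : 0 < x -> 1 - x^-1 <= ln x.
Proof.
move=> x0.
have := @le_ln1Dx R (x^-1 - 1).
rewrite addrCA subrr addr0 lnV ?posrE // => H.
have : ln x >= - (x^-1 - 1) by rewrite lerNl; apply: H; rewrite ltrBrDl subrr invr_gt0.
by rewrite opprB.
Qed.

Definition kf (x : R) := (x + 1) * ln x - 2 * (x - 1).

Lemma kf_der (y : R) : 0 < y -> is_derive y 1 kf (ln y + (y + 1) / y - 2).
Proof.
move=> y0.
have h1 : is_derive y 1 (id + cst 1 : R -> R) (1 + 0).
  exact: is_deriveD.
have h2 : is_derive y 1 (2 \*: (id - cst 1) : R -> R) (2 *: (1 - 0)).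
  exact: is_deriveZ.
have h3 := is_deriveM h1 (is_derive1_ln y0).
have h4 := is_deriveB h3 h2.
have -> : kf = (id + cst 1) * (@ln R) - 2 \*: (id - cst 1).
  by apply/funext => x; rewrite /kf.
apply: is_derive_eq h4 _.
rewrite /=.
rewrite !addr0 subr0; change ((y + 1) * y^-1 + ln y * 1 - 2 * 1 = ln y + (y+1)/y - 2); ring. Qed.


Lemma scR (a b : R) : a *: b = a * b. Proof. by []. Qed.

Lemma kf_sign (x : R) : 0 < x -> 0 <= (x - 1) * kf x.
Proof.
move=> x0.
have [c [c0 E _ _]] := mvt1 _ _ _ x0 kf_der.
have k1 : kf 1 = 0 by rewrite /kf ln1 subrr; ring.
move: E; rewrite k1 subr0 => ->.
rewrite mulrCA mulr_ge0 //; last by rewrite -expr2 sqr_ge0.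
have := ln_ge_1Vx _ c0.
have -> : (c + 1) / c = 1 + c^-1 by field; rewrite gt_eqF.
lra.
Qed.

Definition hf (x : R) := 2 * (x * (x + 2)) * ln x - (x - 1) * (5 * x + 1).

Lemma hf_der (y : R) : 0 < y -> is_derive y 1 hf (4 * kf y).
Proof.
move=> y0.
have h1 : is_derive y 1 (2 \*: (id * (id + cst 2)) : R -> R)
   (2 *: (id y *: (1 + 0) + (id + cst 2) y *: 1)).
  by apply: is_deriveZ; apply: is_deriveM.
have h2 : is_derive y 1 ((id - cst 1) * (5 \*: id + cst 1) : R -> R)
   ((id - cst 1) y *: (5 *: 1 + 0) + (5 \*: id + cst 1) y *: (1 - 0)).
  by apply: is_deriveM.
have h3 := is_deriveB (is_deriveM h1 (is_derive1_ln y0)) h2.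
have -> : hf = (2 \*: (id * (id + cst 2))) * (@ln R) - (id - cst 1) * (5 \*: id + cst 1).
  by apply/funext => x; rewrite /hf.
apply: is_derive_eq h3 _.
rewrite /= !scR /kf.
change (2 * (y * (y + 2)) / y + ln y * (2 * (y * (1 + 0) + (y + 2) * 1)) - ((y - 1) * (5 * 1 + 0) + (5 * y + 1) * (1 - 0)) = 4 * ((y + 1) * ln y - 2 * (y - 1))).
field. by rewrite gt_eqF.
Qed.

Lemma hf_ge0 (x : R) : 0 < x -> 0 <= hf x.
Proof.
move=> x0.
have [c [c0 E l1 g1]] := mvt1 _ _ _ x0 hf_der.
have k1 : hf 1 = 0 by rewrite /hf ln1; ring.
move: E; rewrite k1 subr0 => ->.
have := kf_sign _ c0.
case: (ltgtP x 1) => [xl|xg|->]; last by rewrite subrr mulr0.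
- have := l1 xl => cl H. nra.
- have := g1 xg => cg H. nra.
Qed.

Lemma ln_key (p q : R) : 0 < p -> 0 < q ->
  (p - q) * (5 * p + q) <= 2 * p * (p + 2 * q) * ln (p / q).
Proof.
move=> p0 q0.
have := hf_ge0 _ (divr_gt0 p0 q0); rewrite /hf => H.
have q2 : 0 < q * q by rewrite mulr_gt0.
set L := ln (p / q) in H *.
have e : (p - q) * (5 * p + q) = q * q * ((p / q - 1) * (5 * (p / q) + 1)).
  by field; rewrite gt_eqF.
have e2 : 2 * p * (p + 2 * q) * L = q * q * (2 * (p / q * (p / q + 2)) * L).
  by field; rewrite gt_eqF.
rewrite e e2 -subr_ge0 -mulrBr; apply: mulr_ge0; [exact: ltW | by rewrite subr_ge0 -subr_ge0].
Qed.

Lemma pinsker_pt (p q : R) : 0 <= p -> 0 < q ->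
  3 * (p - q) ^+ 2 <= (2 * p + 4 * q) *
     ((if 0 < p then p * ln (p / q) else 0) - p + q).
Proof.
move=> p0 q0.
case: ifP => pp.
- have := ln_key _ _ pp q0. set L := ln (p / q) => H. nra.
- have -> : p = 0 by apply/eqP; rewrite eq_le p0 andbT leNgt pp.
  rewrite !(mulr0, subr0, add0r, sub0r, sqrrN). nra.
Qed.
End LnIneq.

Section CS.
Variable R : realType.

Lemma cauchy_schwarz (J : finType) (u v : J -> R) :
  (\sum_j u j * v j) ^+ 2 <= (\sum_j u j ^+ 2) * (\sum_j v j ^+ 2).
Proof.
set a := \sum_j u j ^+ 2; set b := \sum_j u j * v j; set c := \sum_j v j ^+ 2.
have a0 : 0 <= a by apply: sumr_ge0 => j _; exact: sqr_ge0.
have c0 : 0 <= c by apply: sumr_ge0 => j _; exact: sqr_ge0.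
have [az|ap] := eqVneq a 0.
  have u0 : forall j, u j = 0.
    move=> j; apply/eqP; rewrite -sqrf_eq0; apply/eqP.
    by move/eqP: az; rewrite psumr_eq0 => [/allP /(_ j (mem_index_enum _)) /implyP /(_ isT) /eqP|j' _]; [|exact: sqr_ge0].
  have -> : b = 0 by rewrite /b big1 // => j _; rewrite u0 mul0r.
  by rewrite az expr0n /= mul0r.
have apos : 0 < a by rewrite lt_def ap a0.
have H : 0 <= \sum_j (b * u j - a * v j) ^+ 2 by apply: sumr_ge0 => j _; exact: sqr_ge0.
have E : \sum_j (b * u j - a * v j) ^+ 2 = b ^+ 2 * a - 2 * a * b * b + a ^+ 2 * c.
  rewrite (eq_bigr (fun j => b ^+ 2 * u j ^+ 2 - 2 * a * b * (u j * v j) + a ^+ 2 * v j ^+ 2)); last by move=> j _; ring.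
  by rewrite big_split sumrB /= -!mulr_sumr -/a -/b -/c; ring.
rewrite E in H.
have : 0 <= a * (a * c - b ^+ 2) by nra.
rewrite pmulr_rge0 // subr_ge0 => ?; lra.
Qed.


Lemma sum_sqrt_le (J : finType) (al be : J -> R) :
  (forall j, 0 <= al j) -> (forall j, 0 <= be j) ->
  \sum_j Num.sqrt (al j) * Num.sqrt (be j) <=
  Num.sqrt (\sum_j al j) * Num.sqrt (\sum_j be j).
Proof.
move=> a0 b0.
have := @cauchy_schwarz J (fun j => Num.sqrt (al j)) (fun j => Num.sqrt (be j)).
have e1 : \sum_j Num.sqrt (al j) ^+ 2 = \sum_j al j by apply: eq_bigr => j _; rewrite sqr_sqrtr.
have e2 : \sum_j Num.sqrt (be j) ^+ 2 = \sum_j be j by apply: eq_bigr => j _; rewrite sqr_sqrtr.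
rewrite e1 e2 => H.
rewrite -sqrtrM; last by apply: sumr_ge0.
rewrite -(@ler_sqrt _ (_ ^+ 2)) ?sqrtr_sqr in H; last first.
  by apply: mulr_ge0; apply: sumr_ge0.
apply: le_trans H; exact: ler_norm.
Qed.

Definition kl_term (p q : R) := if 0 < p then p * ln (p / q) else 0.

Lemma pinsker (J : finType) (p q : J -> R) :
  (forall j, 0 <= p j) -> (forall j, 0 <= q j) ->
  (forall j, q j = 0 -> p j = 0) ->
  \sum_j p j = 1 -> \sum_j q j = 1 ->
  \sum_j `|p j - q j| <= Num.sqrt (2 * \sum_j kl_term (p j) (q j)).
Proof.
move=> p0 q0 qp sp sq.
pose al j := (2 * p j + 4 * q j) / 3.
pose be j := kl_term (p j) (q j) - p j + q j.
have pt j : (p j - q j) ^+ 2 <= al j * be j /\ 0 <= be j.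
  have [qz|qpos] := eqVneq (q j) 0.
    rewrite /al /be qz (qp _ qz) /kl_term ltxx; split; lra.
  have qpos' : 0 < q j by rewrite lt_def qpos q0.
  have := @pinsker_pt R _ _ (p0 j) qpos'; rewrite -/(kl_term _ _) -/(be j) => H.
  have alp : 0 < 2 * p j + 4 * q j by have := p0 j; lra.
  have bpos : 0 <= be j.
    have : 0 <= (2 * p j + 4 * q j) * be j by apply: le_trans _ H; rewrite mulr_ge0 ?sqr_ge0.
    by rewrite pmulr_rge0.
  by split => //; rewrite /al; nra.
have al0 j : 0 <= al j by rewrite /al; have := p0 j; have := q0 j; lra.
apply: (@le_trans _ _ (\sum_j Num.sqrt (al j) * Num.sqrt (be j))).
  apply: ler_sum => j _.
  by rewrite -sqrtrM // -sqrtr_sqr; apply: ler_wsqrtr; case: (pt j).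
apply: le_trans (@sum_sqrt_le J al be al0 (fun j => (pt j).2)) _.
have -> : \sum_j al j = 2.
  rewrite /al -mulr_suml big_split /= -!mulr_sumr sp sq; lra.
have -> : \sum_j be j = \sum_j kl_term (p j) (q j).
  rewrite /be big_split /= sumrB sp sq; lra.
by rewrite sqrtrM //; lra.
Qed.

End CS.

Section Der.
Variables (R : realType) (d : nat).
Implicit Types (f : 'rV[R]_d -> R) (x v : 'rV[R]_d).

Lemma derive_ln_comp f x v : differentiable f x -> 0 < f x ->
  'D_v (fun u => ln (f u)) x = 'D_v f x / f x.
Proof.
move=> df fx0.
have dln : differentiable (@ln R) (f x).
  by apply/derivable1_diffP; apply: ex_derive; exact: is_derive1_ln.
have -> : (fun u => ln (f u)) = (@ln R) \o f by [].
rewrite deriveE; last exact: differentiable_comp.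
rewrite diff_comp // /= -[X in 'd _ _ X = _]mulr1 linearZ /= -deriveE //.
rewrite -derive1E' // derive1E.
by have [_ ->] := is_derive1_ln fx0.
Qed.

Lemma is_derive_bigsum (T : Type) (r : seq T) (F : T -> 'rV[R]_d -> R) (dF : T -> R) x v :
  (forall t, is_derive x v (F t) (dF t)) ->
  is_derive x v (fun u => \sum_(t <- r) F t u) (\sum_(t <- r) dF t).
Proof.
move=> H; elim: r => [|t r IH].
  have -> : (fun u : 'rV[R]_d => \sum_(t <- [::]) F t u) = cst 0.
    by apply/funext => u; rewrite big_nil.
  by rewrite big_nil; exact: is_derive_cst.
have -> : (fun u : 'rV[R]_d => \sum_(t0 <- t :: r) F t0 u) =
   F t + (fun u => \sum_(t0 <- r) F t0 u).
  by apply/funext => u; rewrite big_cons.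
by rewrite big_cons; apply: is_deriveD.
Qed.

End Der.

Section Enorm.
Variables (R : realType) (d : nat).
Implicit Types (u v : 'rV[R]_d).

Lemma enorm_ge0 v : 0 <= enorm v.
Proof. exact: sqrtr_ge0. Qed.

Lemma enorm_sq v : enorm v ^+ 2 = \sum_i v 0 i ^+ 2.
Proof. by rewrite sqr_sqrtr //; apply: sumr_ge0 => i _; exact: sqr_ge0. Qed.

Lemma enormZ (c : R) v : enorm (c *: v) = `|c| * enorm v.
Proof.
rewrite /enorm.
have -> : \sum_i (c *: v) 0 i ^+ 2 = c ^+ 2 * \sum_i v 0 i ^+ 2.
  by rewrite mulr_sumr; apply: eq_bigr => i _; rewrite mxE exprMn.
by rewrite sqrtrM ?sqr_ge0 // sqrtr_sqr.
Qed.

Lemma enormD u v : enorm (u + v) <= enorm u + enorm v.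
Proof.
have cs := @cauchy_schwarz R _ (fun i => u 0 i) (fun i => v 0 i).
have Huv : \sum_i u 0 i * v 0 i <= enorm u * enorm v.
  rewrite /enorm -sqrtrM; last by apply: sumr_ge0 => i _; exact: sqr_ge0.
  apply: le_trans (ler_norm _) _.
  by rewrite -sqrtr_sqr; apply: ler_wsqrtr.
rewrite -(@ler_pXn2r _ 2) // ?nnegrE ?addr_ge0 ?enorm_ge0 //.
rewrite enorm_sq sqrrD !enorm_sq.
have -> : \sum_i (u + v) 0 i ^+ 2 =
   \sum_i u 0 i ^+ 2 + 2 * \sum_i u 0 i * v 0 i + \sum_i v 0 i ^+ 2.
  rewrite mulr_sumr -!big_split /=; apply: eq_bigr => i _; rewrite mxE; ring.
lra.
Qed.

Lemma enorm0 : enorm (0 : 'rV[R]_d) = 0.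
Proof. by rewrite /enorm big1 ?sqrtr0 // => i _; rewrite mxE expr0n. Qed.

Lemma enorm_sum (J : finType) (c : J -> R) (w : J -> 'rV[R]_d) :
  enorm (\sum_j c j *: w j) <= \sum_j `|c j| * enorm (w j).
Proof.
elim/big_ind2: _ => [|x1 x2 y1 y2 h1 h2|j _].
- by rewrite enorm0.
- by apply: le_trans (enormD _ _) _; apply: lerD.
- by rewrite enormZ.
Qed.

End Enorm.
Arguments enorm_ge0 {R d}. Arguments enormZ {R d}. Arguments enormD {R d}. Arguments enorm_sum {R d J}.

Section Main.
Variables (R : realType) (d : nat).

Lemma bin_uniq (Rlo delta r : R) (B : nat) (k k' : 'I_B) : 0 < delta ->
  inbin (Rlo + k%:R * delta) delta r -> inbin (Rlo + k'%:R * delta) delta r -> k = k'.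
Proof.
move=> d0 /andP[h1 h2] /andP[h3 h4].
have lt1 : forall (a b : 'I_B), Rlo + a%:R * delta <= r -> r < Rlo + b%:R * delta + delta -> (a <= b)%N.
  move=> a b ha hb.
  have : a%:R * delta < (b.+1)%:R * delta :> R by rewrite -addn1 natrD; lra.
  by rewrite ltr_pM2r // ltr_nat ltnS.
by apply/val_inj/eqP; rewrite eqn_leq !lt1.
Qed.

Lemma main_alg (A : finType) (B : nat) (p : A -> R) (rew : A -> R) (s : A -> 'rV[R]_d)
  (G Rmax Rlo Rhi delta : R) :
  (forall a, 0 < p a) -> \sum_a p a = 1 -> \sum_a p a *: s a = 0 ->
  (forall a, enorm (s a) <= G) ->
  -Rmax <= Rlo -> Rhi <= Rmax -> 0 < delta -> Rhi = Rlo + B%:R * delta ->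
  (forall a, exists k : 'I_B, inbin (Rlo + k%:R * delta) delta (rew a)) ->
  enorm (\sum_a (p a * rew a) *: s a)
    <= Num.sqrt 2 * G * Rmax
         * Num.sqrt (mutual_info (fun a (k : 'I_B) => p a * (inbin (Rlo + k%:R * delta) delta (rew a))%:R))
       + G * delta.
Proof.
move=> p0 p1 ps0 sG hlo hhi d0 hhi_eq hbin.
pose In a (k : 'I_B) := inbin (Rlo + k%:R * delta) delta (rew a).
pose kap a := xchoose (hbin a).
have kapP a : In a (kap a) := xchooseP (hbin a).
have InE a k : In a k = (k == kap a).
  apply/idP/eqP => [h|->]; last exact: kapP.
  exact: bin_uniq d0 h (kapP a).
pose P a k := p a * (In a k)%:R.
have PE a k : P a k = p a * (k == kap a)%:R by rewrite /P InE.
pose rho k := \sum_a P a k.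
pose m (k : 'I_B) := Rlo + k%:R * delta + delta / 2.
have Gge0 : 0 <= G.
  have : (0 < \sum_a p a) by rewrite p1.
  case: (pickP A) => [a _|h]; first by move=> _; exact: le_trans (@enorm_ge0 _ _ (s a)) (sG a).
  by rewrite big_pred0 // ltxx.
have mb k : `|m k| <= Rmax.
  have kB : (k.+1 <= B)%N := ltn_ord k.
  have : (k.+1)%:R <= B%:R :> R by rewrite ler_nat.
  rewrite -addn1 natrD => kB'.
  have k0 : 0 <= k%:R :> R by [].
  rewrite ler_norml /m; apply/andP; split; nra.
have rb a : `|rew a - m (kap a)| <= delta / 2.
  have /andP[h1 h2] := kapP a.
  rewrite ler_norml /m; apply/andP; split; lra.
have split1 : \sum_a (p a * rew a) *: s a =
   \sum_a (p a * m (kap a)) *: s a + \sum_a (p a * (rew a - m (kap a))) *: s a.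
  by rewrite -big_split /=; apply: eq_bigr => a _; rewrite -scalerDl; congr (_ *: _); ring.
have X1E : \sum_a (p a * m (kap a)) *: s a =
   \sum_(ak : A * 'I_B) ((P ak.1 ak.2 - p ak.1 * rho ak.2) * m ak.2) *: s ak.1.
  rewrite -(pair_big xpredT xpredT (fun a k => ((P a k - p a * rho k) * m k) *: s a)) /=.
  have e1 a : \sum_k ((P a k - p a * rho k) * m k) *: s a =
      (p a * m (kap a)) *: s a - (p a * \sum_k rho k * m k) *: s a.
    rewrite -scaler_suml -scalerBl; congr (_ *: _).
    under eq_bigr do rewrite mulrBl.
    rewrite sumrB; congr (_ - _).
      rewrite (bigD1 (kap a)) //= big1 ?addr0; first by rewrite PE eqxx mulr1.
      by move=> k /negbTE hk; rewrite PE hk mulr0 mul0r.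
    by rewrite mulr_sumr; apply: eq_bigr => k _; rewrite mulrA.
  under [RHS]eq_bigr do rewrite e1.
  rewrite sumrB.
  have -> : \sum_a (p a * \sum_k rho k * m k) *: s a = 0.
    under eq_bigr do rewrite mulrC -scalerA.
    by rewrite -scaler_sumr ps0 scaler0.
  by rewrite subr0.
have marg a : \sum_k P a k = p a.
  rewrite (bigD1 (kap a)) //= big1 ?addr0; first by rewrite PE eqxx mulr1.
  by move=> k /negbTE hk; rewrite PE hk mulr0.
have P0 a k : 0 <= P a k by apply: mulr_ge0; [exact: ltW | exact: ler0n].
have rho0 k : 0 <= rho k by apply: sumr_ge0.
have sumP : \sum_(ak : A * 'I_B) P ak.1 ak.2 = 1.
  by rewrite -(pair_big xpredT xpredT (fun a k => P a k)) /=; under eq_bigr do rewrite marg.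
have sumrho : \sum_k rho k = 1.
  by rewrite /rho exchange_big /=; under eq_bigr do rewrite marg.
have sumQ : \sum_(ak : A * 'I_B) p ak.1 * rho ak.2 = 1.
  rewrite -(pair_big xpredT xpredT (fun a k => p a * rho k)) /=.
  by under eq_bigr do rewrite -mulr_sumr sumrho mulr1.
have qP ak : p ak.1 * rho ak.2 = 0 -> P ak.1 ak.2 = 0.
  move/eqP; rewrite mulf_eq0 gt_eqF //= => /eqP h.
  exact: (@psumr_eq0P _ _ xpredT (fun a => P a ak.2) (fun a _ => P0 a ak.2) h ak.1 isT).
have MIE : mutual_info P = \sum_(ak : A * 'I_B) @kl_term R (P ak.1 ak.2) (p ak.1 * rho ak.2).
  rewrite /mutual_info -(pair_big xpredT xpredT (fun a k => @kl_term R (P a k) (p a * rho k))) /=.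
  by apply: eq_bigr => a _; apply: eq_bigr => k _; rewrite /kl_term marg.
have pins := @pinsker R (A * 'I_B)%type (fun ak => P ak.1 ak.2) (fun ak => p ak.1 * rho ak.2)
  (fun ak => P0 ak.1 ak.2) (fun ak => mulr_ge0 (ltW (p0 ak.1)) (rho0 ak.2)) qP sumP sumQ.
rewrite -MIE in pins.
have Rmax0 : 0 <= Rmax.
  have : 0 <= B%:R * delta :> R by apply: mulr_ge0; [exact: ler0n | exact: ltW].
  lra.
have bX1 : enorm (\sum_a (p a * m (kap a)) *: s a) <= Num.sqrt (2 * mutual_info P) * (Rmax * G).
  rewrite X1E; apply: le_trans (enorm_sum _ _) _.
  apply: le_trans (_ : \sum_(ak : A * 'I_B) `|P ak.1 ak.2 - p ak.1 * rho ak.2| * (Rmax * G) <= _); last first.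
    by rewrite -mulr_suml ler_wpM2r // mulr_ge0.
  apply: ler_sum => ak _.
  rewrite normrM -mulrA ler_wpM2l //.
  by apply: ler_pM; [exact: normr_ge0 | exact: enorm_ge0 | exact: mb | exact: sG].
have bX2 : enorm (\sum_a (p a * (rew a - m (kap a))) *: s a) <= delta / 2 * G.
  apply: le_trans (enorm_sum _ _) _.
  apply: le_trans (_ : \sum_a p a * (delta / 2 * G) <= _); last by rewrite -mulr_suml p1 mul1r.
  apply: ler_sum => a _.
  rewrite normrM (gtr0_norm (p0 a)) -[_ * `|_| * _]mulrA; apply: ler_wpM2l; first exact: ltW.
  by apply: ler_pM; [exact: normr_ge0 | exact: enorm_ge0 | exact: rb | exact: sG].
rewrite -[mutual_info _]/(mutual_info P) split1.
apply: le_trans (enormD _ _) _.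
rewrite sqrtrM // in bX1.
have : 0 <= G * delta by apply: mulr_ge0 => //; exact: ltW.
set S2 := Num.sqrt 2 in bX1 *; set SM := Num.sqrt (mutual_info P) in bX1 *.
have -> : S2 * G * Rmax * SM = S2 * SM * (Rmax * G) by ring.
lra.
Qed.
End Main.

Local Close Scope classical_set_scope.

Theorem theorem2 (R : realType) (d : nat) (A : finType)
  (pi : 'rV[R]_d -> A -> R) (rew : A -> R)
  (Gmax Rmax Rlo Rhi delta : R) (B : nat) (theta : 'rV[R]_d) :
  (forall t a, 0 < pi t a) ->
  (forall t, \sum_(a : A) pi t a = 1) ->
  (forall t a, differentiable (fun u => pi u a) t) ->
  (forall a, enorm (grad (fun u => ln (pi u a)) theta) <= Gmax) ->
  (forall a, `|rew a| <= Rmax) ->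
  -Rmax <= Rlo -> Rhi <= Rmax ->
  0 < delta ->
  Rhi = Rlo + B%:R * delta ->
  (forall a, exists k : 'I_B, inbin (Rlo + k%:R * delta) delta (rew a)) ->
  enorm (grad (fun u => \sum_(a : A) pi u a * rew a) theta)
    <= Num.sqrt 2 * Gmax * Rmax
         * Num.sqrt (mutual_info (@joint_A_Rtilde R d A pi theta rew Rlo delta B))
       + Gmax * delta.
Proof.
move=> pi0 pi1 pidiff hG hR hlo hhi d0 hhi_eq hbin.
pose s a := grad (fun u => ln (pi u a)) theta.
have Dpi a i : 'D_(delta_mx 0 i) (fun u => pi u a) theta = pi theta a * s a 0 i.
  rewrite /s /grad mxE derive_ln_comp //; field; exact: lt0r_neq0.
have isd a i : is_derive theta (delta_mx 0 i) (fun u => pi u a)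
    (pi theta a * s a 0 i).
  by rewrite -Dpi; apply: derivableP; apply: diff_derivable.
have ps0 : \sum_a pi theta a *: s a = 0.
  apply/rowP => i; rewrite summxE [RHS]mxE.
  transitivity (\sum_a pi theta a * s a 0 i); first by apply: eq_bigr => a _; rewrite mxE.
  have h := @is_derive_bigsum R d A (index_enum A) (fun a u => pi u a) _ theta _ (fun a => isd a i).
  have e : (fun u => \sum_(t <- index_enum A) pi u t) = cst 1.
    by apply/funext => u; rewrite /= -(pi1 u).
  rewrite e in h.
  have := @derive_val _ _ _ _ _ _ _ h; rewrite derive_cst => H.
  exact: esym H.
have gE : grad (fun u => \sum_(a : A) pi u a * rew a) theta =
    \sum_a (pi theta a * rew a) *: s a.
  apply/rowP => i; rewrite mxE summxE.
  have h : forall a, is_derive theta (delta_mx 0 i) (fun u => pi u a * rew a)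
      (pi theta a * s a 0 i * rew a).
    move=> a.
    have -> : (fun u => pi u a * rew a) = rew a \*: (fun u => pi u a).
      by apply/funext => u; rewrite /= mulrC.
    have H := (@is_deriveZ _ _ _ _ (rew a) _ _ _ (isd a i)).
    apply: is_derive_eq H _.
    change (rew a * (pi theta a * s a 0 i) = pi theta a * s a 0 i * rew a); ring.
  have := @is_derive_bigsum R d A (index_enum A) (fun a u => pi u a * rew a) _ theta _ h.
  move=> /(@derive_val _ _ _ _ _ _ _) ->.
  apply: eq_bigr => a _; rewrite /= !mxE; ring.
rewrite gE.
exact: (@main_alg R d A B (pi theta) rew s Gmax Rmax Rlo Rhi delta (pi0 theta) (pi1 theta) ps0 hG hlo hhi d0 hhi_eq hbin).
Qed.
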